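(* Consider the damped wave equation $u_{tt}=u_{xx}-\gamma(x)u_t+g(x,t)$ on $a\le x\le b$ with Dirichlet boundary data $u(a,t)=u_a(t)$, $u(b,t)=u_b(t)$ and initial data $u(x,0)=\phi(x)$, $u_t(x,0)=\psi(x)$, where $\gamma\ge 0$. Let $h=(b-a)/N$, $k>0$ the time step, and let $\mathcal{M}$ be the $(2N-2)\times(2N-2)$ block matrix $$\mathcal{M}=\begin{pmatrix}0 & I\\ \frac{1}{h^2}A & -\Gamma\end{pmatrix},$$ where $I$ is the $(N-1)\times(N-1)$ identity, $A$ is the $(N-1)\times(N-1)$ tridiagonal matrix with $-2$ on the diagonal and $1$ on the off-diagonals, and $\Gamma=\mathrm{diag}(\gamma(x_1),\dots,\gamma(x_{N-1}))$ with $x_i=a+ih$. Then the implicit scheme FD-(1,1), $$\big(I-\tfrac12\mathcal{M}k\big)V^{n+1}=\big(I+\tfrac12\mathcal{M}k\big)V^n+\tfrac{k}{2}\big(I+\tfrac12\mathcal{M}k\big)F(t_n)+\tfrac{k}{2}\big(I-\tfrac12\mathcal{M}k\big)F(t_n+k),$$ is unconditionally stable, i.e. stable for all $h>0$ and $k>0$.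
   Context: The scheme arises by writing $U=(u,u_t)^T$, discretizing $u_{xx}$ by central differences at interior nodes $x_1,\dots,x_{N-1}$, giving $V'(t)=\mathcal{M}V(t)+F(t)$ with $V(t)=(u(x_1,t),\dots,u(x_{N-1},t),u_t(x_1,t),\dots,u_t(x_{N-1},t))^T$ and $F(t)=(0,\,G(t)+\frac{1}{h^2}B(t))^T$, $G(t)=(g(x_1,t),\dots,g(x_{N-1},t))^T$, $B(t)=(u_a(t),0,\dots,0,u_b(t))^T$; $V^n$ approximates $V(t_n)$, $t_n=nk$. A scheme is called stable if all eigenvalues of its amplification matrix (here $(I-\frac12 k\mathcal{M})^{-1}(I+\frac12 k\mathcal{M})$) lie in the closed unit disk. *)

(* Defs.v *)
(* Real scalars: an arbitrary real closed field R (e.g. the reals);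
   eigenvalues are taken in the algebraic closure R[i] (complex numbers over R). *)
From HB Require Import structures.
From mathcomp Require Import all_boot all_order all_algebra.
From mathcomp Require Export complex.
Unset Printing Implicit Defensive.
Import Order.TTheory GRing.Theory Num.Theory.
Local Open Scope ring_scope.

Section FD11.
Variable R : rcfType.

Definition mesh (a b : R) (N : nat) : R := (b - a) / N%:R.

(* interior node x_i = a + i h, for i = 1..N-1; index j : 'I_(N.-1) stands for i = j+1 *)
Definition node (a b : R) (N : nat) (j : 'I_N.-1) : R := a + (j.+1)%:R * mesh a b N.

Definition Atri (n : nat) : 'M[R]_n :=
  \matrix_(i < n, j < n)
    (if i == j then -2 else if (i.+1 == j) || (j.+1 == i) then 1 else 0).

Definition Gam (a b : R) (N : nat) (gamma : R -> R) : 'M[R]_N.-1 :=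
  diag_mx (\row_j gamma (node a b N j)).

Definition Mblk (a b : R) (N : nat) (gamma : R -> R) : 'M[R]_(N.-1 + N.-1) :=
  block_mx 0 1%:M ((mesh a b N ^- 2) *: Atri N.-1) (- Gam a b N gamma).

Definition Iminus (a b : R) (N : nat) (gamma : R -> R) (k : R) : 'M[R]_(N.-1 + N.-1) :=
  1%:M - (k / 2) *: Mblk a b N gamma.
Definition Iplus (a b : R) (N : nat) (gamma : R -> R) (k : R) : 'M[R]_(N.-1 + N.-1) :=
  1%:M + (k / 2) *: Mblk a b N gamma.

Definition amplification (a b : R) (N : nat) (gamma : R -> R) (k : R) : 'M[R]_(N.-1 + N.-1) :=
  invmx (Iminus a b N gamma k) *m Iplus a b N gamma k.

Definition stable_amp (m : nat) (G : 'M[R]_m) : Prop :=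
  forall lam : R[i], eigenvalue (map_mx (real_complex R) G) lam -> `|lam| <= 1.

End FD11.

Arguments mesh {R}. Arguments node {R}. Arguments Atri {R}. Arguments Gam {R}.
Arguments Mblk {R}. Arguments Iminus {R}. Arguments Iplus {R}.
Arguments amplification {R}. Arguments stable_amp {R m}.

(* Main.v *)
Require Import Defs.
From HB Require Import structures.
From mathcomp Require Import all_boot all_order all_algebra.
From mathcomp Require Import complex ring lra zify.
Import Order.TTheory GRing.Theory Num.Theory.
Local Open Scope ring_scope.
Section S.
Variable R : rcfType.
Definition Bmx (n : nat) : 'M[R]_(n, n.+1) :=
  \matrix_(i < n, j < n.+1) ((i == j :> nat)%:R - (i.+1 == j :> nat)%:R).

Lemma sum_ind (n x y : nat) : (x < n)%N ->
  \sum_(l < n) ((x == l :> nat)%:R * (y == l :> nat)%:R : R) = (x == y)%:R.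
Proof.
move=> hx; rewrite (bigD1 (Ordinal hx)) //= big1 ?addr0.
  by rewrite eqxx mul1r eq_sym.
by move=> l hl; rewrite (_ : (x == l :> nat) = false) ?mul0r //; apply/negP => /eqP e;
  move/eqP: hl; apply; apply/val_inj.
Qed.

Lemma Atri_B n : Atri n = - (Bmx n *m (Bmx n)^T).
Proof.
apply/matrixP => i j; rewrite !mxE.
under eq_bigr => l _ do rewrite !mxE mulrBl !mulrBr.
rewrite !sumrB !sum_ind ?ltnS ?ltn_ord 1?ltnW ?ltn_ord //.
rewrite !eqSS (_ : (i == j) = (i == j :> nat)) //.
case: (i =P j :> nat) => [e|ne].
  have -> : (i.+1 == j :> nat) = false by apply/eqP; lia.
  have -> : (i == j.+1 :> nat) = false by apply/eqP; lia.
  rewrite /=; lra.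
case: (i.+1 =P j :> nat) => [e|ne2].
  have -> : (i == j.+1 :> nat) = false by apply/eqP; lia.
  rewrite /=; lra.
case: (i =P j.+1 :> nat) => [e|ne3].
  rewrite eq_sym e eqxx /=; lra.
have -> : (j.+1 == i :> nat) = false by apply/eqP; lia.
rewrite /=; lra.
Qed.
Local Notation rc := (real_complex R).
Definition nrm2 (z : R[i]) : R := complex.Re z ^+ 2 + complex.Im z ^+ 2.

Lemma mulJ (z : R[i]) : z * conjc z = (nrm2 z)%:C%C.
Proof. case: z => a b; rewrite /nrm2 /=; simpc; by rewrite [b * a]mulrC addNr !expr2. Qed.

Lemma nrm2_ge0 z : 0 <= nrm2 z.
Proof. by rewrite /nrm2 addr_ge0 ?sqr_ge0. Qed.

Lemma nrm2_gt0 z : z != 0 -> 0 < nrm2 z.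
Proof.
case: z => a b hz; rewrite lt0r nrm2_ge0 andbT /nrm2 /= paddr_eq0 ?sqr_ge0 //.
rewrite !sqrf_eq0; apply: contra hz => /andP[/eqP -> /eqP ->] //.
Qed.

Lemma qform m (y : 'rV[R[i]]_m) :
  (y *m (map_mx conjc y)^T) 0 0 = (\sum_j nrm2 (y 0 j))%:C%C.
Proof.
rewrite !mxE rmorph_sum; apply: eq_bigr => j _; by rewrite !mxE mulJ.
Qed.

Lemma qform_gt0 m (y : 'rV[R[i]]_m) : y != 0 -> 0 < \sum_j nrm2 (y 0 j).
Proof.
move=> hy.
have [j hj] : exists j, y 0 j != 0.
  apply/existsP; apply: contraNT hy; rewrite negb_exists => /forallP h.
  apply/eqP/matrixP => i j; rewrite !ord1 mxE; exact/eqP/negPn/h.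
rewrite (bigD1 j) //= ltr_pwDl ?nrm2_gt0 // sumr_ge0 // => i _; exact: nrm2_ge0.
Qed.

Lemma qformD m (y : 'rV[R[i]]_m) (g : 'rV[R]_m) :
  (y *m map_mx rc (diag_mx g) *m (map_mx conjc y)^T) 0 0
   = (\sum_j g 0 j * nrm2 (y 0 j))%:C%C.
Proof.
rewrite map_diag_mx mul_mx_diag !mxE rmorph_sum; apply: eq_bigr => j _.
by rewrite !mxE mulrAC mulJ rmorphM mulrC. Qed.
Lemma quad_re (P G Q : R) (mu : R[i]) : 0 < P -> 0 <= G -> 0 <= Q ->
  P%:C%C * mu^+2 + G%:C%C * mu + Q%:C%C = 0 -> complex.Re mu <= 0.
Proof.
case: mu => x y /= hP hG hQ.
rewrite expr2; simpc => /eqP; rewrite eq_complex /= => /andP[/eqP e1 /eqP e2].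
rewrite leNgt; apply/negP => hx.
have hy : y = 0.
  have : y * (2 * P * x + G) = 0 by rewrite -e2; ring.
  move/eqP; rewrite mulf_eq0 => /orP[/eqP //|]; move/eqP => h.
  have : 0 < 2 * P * x + G by have := mulr_gt0 hP hx; lra.
  by rewrite h ltxx.
subst y. have := mulr_gt0 hP hx; have := mulr_ge0 hG (ltW hx); have := mulr_gt0 (mulr_gt0 hP hx) hx; lra.
Qed.

Lemma core n (s : R) (g : 'rV[R]_n) (w : 'rV[R[i]]_(n + n)) (mu : R[i]) :
  0 < s -> (forall j, 0 <= g 0 j) -> w != 0 ->
  w *m block_mx 0 1%:M (s%:C%C *: map_mx rc (Atri n)) (- map_mx rc (diag_mx g))
    = mu *: w ->
  complex.Re mu <= 0.
Proof.
move=> hs hg; rewrite -(hsubmxK w) mul_row_block scale_row_mx => hw /eq_row_mx [E1 E2].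
move: hw E1 E2; set u := lsubmx w; set v := rsubmx w => hw E1 E2.
rewrite mulmx0 add0r in E1; rewrite mulmx1 mulmxN in E2.
have hu : u = mu *: v + v *m map_mx rc (diag_mx g) by rewrite -E2 subrK.
have hv : v != 0.
  apply: contraNneq hw => v0; rewrite hu v0 scaler0 mul0mx addr0 row_mx0 //.
rewrite hu in E1.
set vt := (map_mx conjc v)^T.
have := congr1 (fun X => (X *m vt) 0 0) E1 => /=.
rewrite scalerDr scalerA mulmxDl -!scalemxAl -scalemxAr -!scalemxAl.
rewrite [fun_of_matrix (_ + _) 0 0]mxE !{1}[fun_of_matrix (_ *: _) 0 0]mxE.
rewrite qform qformD.
have hB : (map_mx rc (Bmx n))^T *m vt = (map_mx conjc (v *m map_mx rc (Bmx n)))^T.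
  rewrite map_mxM trmx_mul; congr (_ *m _); congr (_^T).
  rewrite -map_mx_comp; apply: eq_map_mx => x /=; by rewrite oppr0.
rewrite Atri_B map_mxN map_mxM mulmxN mulNmx -map_trmx mulmxA -(mulmxA (v *m _)) hB.
rewrite [fun_of_matrix (- _) 0 0]mxE qform.
set P := \sum_j nrm2 (v 0 j); set G := \sum_j g 0 j * nrm2 (v 0 j).
set Q := \sum_j nrm2 _ => H.
apply: (@quad_re P G (s * Q)).
- exact: qform_gt0.
- by apply: sumr_ge0 => j _; rewrite mulr_ge0 ?nrm2_ge0.
- apply: mulr_ge0; [exact: ltW | apply: sumr_ge0 => j _; exact: nrm2_ge0].
rewrite rmorphM; transitivity (mu * mu * P%:C%C + mu * G%:C%C - s%:C%C * - Q%:C%C); first by ring.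
by rewrite -H subrr.
Qed.
Lemma norm_le1 (lam mu : R[i]) (c : R) : 0 < c -> complex.Re mu <= 0 ->
  lam * (1 - c%:C%C * mu) = 1 + c%:C%C * mu -> `|lam| <= 1.
Proof.
case: lam => p q; case: mu => x y /= hc hx.
simpc => /eqP; rewrite eq_complex /= => /andP[/eqP e1 /eqP e2].
simpc.
rewrite -sqrtr1 ler_sqrt ?ltr01 // !expr2.
set X := c * x in e1 e2 *; set Y := c * y in e1 e2 *.
have hX : X <= 0 by rewrite /X; nra.
have hS : (p * p + q * q) * ((1 - X)^+2 + Y^+2) = (p * (1 - X) + q * Y)^+2 + (- (p * Y) + q * (1 - X))^+2 by ring.
rewrite e1 e2 in hS.
have hD : 1 <= (1 - X)^+2 + Y^+2 by nra.
rewrite leNgt; apply/negP => hgt.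
have : 0 < (p * p + q * q - 1) * ((1 - X)^+2 + Y^+2) by apply: mulr_gt0; lra.
have : (1 + X)^+2 <= (1 - X)^+2 by rewrite !expr2; nra.
lra.
Qed.
End S.

Theorem proposition2 (R : rcfType) (a b : R) (N : nat) (gamma : R -> R) (k : R) :
  a < b -> (0 < N)%N -> 0 < k ->
  (forall x, a <= x <= b -> 0 <= gamma x) ->
  Iminus a b N gamma k \in unitmx /\ stable_amp (amplification a b N gamma k).
Proof.
move=> hab hN hk hg.
have hh : 0 < mesh a b N by rewrite /mesh divr_gt0 ?subr_gt0 ?ltr0n.
set s := mesh a b N ^- 2.
have hs : 0 < s by rewrite /s invr_gt0 exprn_gt0.
set g := \row_j gamma (node a b N j) : 'rV[R]_N.-1.
have hgj : forall j, 0 <= g 0 j.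
  move=> j; rewrite mxE; apply: hg; rewrite /node.
  have hj : (j.+1)%:R <= N%:R :> R by rewrite ler_nat; have := ltn_ord j; lia.
  have e : N%:R * mesh a b N = b - a.
    by rewrite /mesh mulrCA divff ?mulr1 // pnatr_eq0 -lt0n.
  have h1 := ler_wpM2r (ltW hh) hj.
  have h2 : 0 <= (j.+1)%:R * mesh a b N by rewrite mulr_ge0 ?ler0n ?ltW.
  apply/andP; split; lra.
set Mc := map_mx (real_complex R) (Mblk a b N gamma).
have McE : Mc = block_mx 0 1%:M (s%:C%C *: map_mx (real_complex R) (Atri N.-1))
    (- map_mx (real_complex R) (diag_mx g)).
  by rewrite /Mc /Mblk map_block_mx map_mx0 map_mx1 map_mxZ map_mxN.
have eig : forall (w : 'rV[R[i]]_(N.-1 + N.-1)) mu, w != 0 -> w *m Mc = mu *: w -> complex.Re mu <= 0.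
  by move=> w mu hw; rewrite McE; apply: core.
have hc : 0 < k / 2 by rewrite divr_gt0.
have hU : Iminus a b N gamma k \in unitmx.
  rewrite unitmxE unitfE; apply/negP => /det0P [v hv0 hv].
  rewrite /Iminus mulmxBr mulmx1 -scalemxAr in hv.
  move/eqP: hv; rewrite subr_eq0 => /eqP hv.
  have e : v *m Mblk a b N gamma = (k / 2)^-1 *: v.
    by rewrite {2}hv scalerA mulVf ?scale1r // gt_eqF.
  have := eig (map_mx (real_complex R) v) ((k / 2)^-1)%:C%C.
  rewrite map_mx_eq0 hv0 /Mc -map_mxM e map_mxZ /= => /(_ isT erefl).
  by rewrite leNgt invr_gt0 hc.
split => // lam /eigenvalueP [v hv hv0].
rewrite /amplification map_mxM map_invmx in hv.
set Imc := map_mx (real_complex R) (Iminus a b N gamma k) in hv.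
set Ipc := map_mx (real_complex R) (Iplus a b N gamma k) in hv.
have hUc : Imc \in unitmx by rewrite map_unitmx.
set w := v *m invmx Imc.
have hvw : v = w *m Imc by rewrite /w mulmxKV.
have hw0 : w != 0 by apply: contraNneq hv0 => w0; rewrite hvw w0 mul0mx.
rewrite mulmxA -/w hvw in hv.
set cC := (k / 2)%:C%C.
have ImE : Imc = 1%:M - cC *: Mc by rewrite /Imc /Iminus map_mxB map_mx1 map_mxZ.
have IpE : Ipc = 1%:M + cC *: Mc by rewrite /Ipc /Iplus map_mxD map_mx1 map_mxZ.
rewrite ImE IpE mulmxDr mulmxBr mulmx1 -!scalemxAr in hv.
set X := w *m Mc in hv.
have Xdef : X = w *m Mc by [].
clearbody X w.
have E : (cC * (1 + lam)) *: X = (lam - 1) *: w.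
  apply/rowP => j; have := congr1 (fun M : 'rV[R[i]]_(N.-1 + N.-1) => M 0 j) hv; rewrite !mxE => Ej.
  apply/eqP; rewrite -subr_eq0; apply/eqP.
  transitivity ((w 0 j + cC * X 0 j) - lam * (w 0 j - cC * X 0 j)); first by ring.
  by rewrite Ej subrr.
have hcC : cC != 0.
  by apply/eqP => h; have := congr1 (@complex.Re R) h => /= c0; move: hc; rewrite c0 ltxx.
have [->|hl] := eqVneq lam (-1); first by rewrite normrN1.
have hl1 : 1 + lam != 0 by rewrite addrC addr_eq0.
set mu := (lam - 1) / (cC * (1 + lam)).
have Xe : X = mu *: w.
  by rewrite /mu mulrC -scalerA -E scalerA mulVf ?scale1r // mulf_neq0.
have hre := eig w mu hw0 (etrans (esym Xdef) Xe).
apply: (@norm_le1 R lam mu (k / 2) hc hre).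
rewrite /mu -/cC; field; rewrite hl1 /=.
by apply/negP => /eqP/(congr1 (@complex.Re R)) /= k0; move: hk; rewrite k0 ltxx.
Qed.
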